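(* Let $A=\sigma(R)\langle x_1,\dots,x_n\rangle$ be a quasi-commutative bijective $\sigma$-PBW extension of a left Noetherian ring $R$. Let $c_1,\dots,c_t\in R\setminus\{0\}$ and let $\mathbf X_1,\dots,\mathbf X_t$ be monomials of $A^m$. Let $L=[c_1\mathbf X_1\ \cdots\ c_t\mathbf X_t]$ and $$\mathrm{Syz}(L)=\{(h_1,\dots,h_t)^T\in A^t:\sum_jh_jc_j\mathbf X_j=\mathbf 0\}.$$ Put $\beta_j=\exp(\mathbf X_j)$. For each nonempty $J\subseteq\{1,\dots,t\}$ that is saturated with respect to $\{\mathbf X_1,\dots,\mathbf X_t\}$ and satisfies $\mathbf X_J\neq\mathbf 0$: - let $\gamma_j\in\mathbb N^n$ ($j\in J$) be defined by $\gamma_j+\beta_j=\exp(\mathbf X_J)$; - let $B^J=\{\mathbf b^J_1,\dots,\mathbf b^J_{r_J}\}$, with $\mathbf b^J_v=(b^J_{vj})_{j\in J}$, be a finite generating set of the left $R$-module $$\mathrm{Syz}_R[\sigma^{\gamma_j}(c_j)c_{\gamma_j,\beta_j}\mid j\in J]=\Big\{(b_j)_{j\in J}\in R^J:\sum_{j\in J}b_j\sigma^{\gamma_j}(c_j)c_{\gamma_j,\beta_j}=0\Big\};$$ - put $\mathbf s^J_v=\sum_{j\in J}b^J_{vj}x^{\gamma_j}\tilde{\mathbf e}_j\in A^t$, where $\tilde{\mathbf e}_1,\dots,\tilde{\mathbf e}_t$ is the canonical basis of $A^t$. Then each $\mathbf s^J_v$ is a homogeneous syzygy of $\mathrm{Syz}(L)$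 of degree $\mathbf X_J$. Moreover, the set of all such $\mathbf s^J_v$ (over all such saturated $J$ and $1\le v\le r_J$) generates $\mathrm{Syz}(L)$ as a left $A$-module.
   Context: Let $R\subseteq A$ be rings. $A$ is a $\sigma$-PBW extension of $R$, written $A=\sigma(R)\langle x_1,\dots,x_n\rangle$, if there are $x_1,\dots,x_n\in A\setminus R$ such that: (i) $A$ is a free left $R$-module with basis $\mathrm{Mon}(A)=\{x^\alpha=x_1^{\alpha_1}\cdots x_n^{\alpha_n}:\alpha\in\mathbb N^n\}$, with $x^0=1$; (ii) for every $i$ and every $r\in R\setminus\{0\}$ there is $c_{i,r}\in R\setminus\{0\}$ with $x_ir-c_{i,r}x_i\in R$; (iii) for all $i,j$ there is $c_{i,j}\in R\setminus\{0\}$ with $x_jx_i-c_{i,j}x_ix_j\in R+Rx_1+\dots+Rx_n$. There are injective ring endomorphisms $\sigma_i$ of $R$ with $x_ir=\sigma_i(r)x_i+\delta_i(r)$, where $\delta_i$ are $\sigma_i$-derivations. Write $\sigma^\alpha=\sigma_1^{\alpha_1}\circ\cdots\circ\sigma_n^{\alpha_n}$. For $\alpha,\beta$ there are unique $c_{\alpha,\beta}\in R$ and $p_{\alpha,\beta}\in A$ with $x^\alpha x^\beta=c_{\alpha,\beta}x^{\alpha+\beta}+p_{\alpha,\beta}$, where $p_{\alpha,\beta}=0$ or $\deg p_{\alpha,\beta}<|\alpha+\beta|$. $A$ is quasi-commutative if $x_ir=c_{i,r}x_i$ and $x_jx_i=c_{i,j}x_ix_j$ exactly (then $p_{\alpha,\beta}=0$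 and $x^\alpha r=\sigma^\alpha(r)x^\alpha$). $A$ is bijective if each $\sigma_i$ is bijective and $c_{i,j}$ is invertible for $i<j$ (then all $c_{\alpha,\beta}$ are invertible). $\mathrm{Mon}(A)$ carries a monomial order (a total order compatible with multiplication via leading monomials, with $x^\alpha\succeq1$, degree compatible); $lm$ denotes leading monomial, $lm(x^\alpha x^\beta)=x^{\alpha+\beta}$. Monomials of $A^m$ are $x^\alpha\mathbf e_i$, with $\exp(x^\alpha\mathbf e_i)=\alpha$. The monomial $x^\alpha\mathbf e_i$ divides $x^\beta\mathbf e_j$ iff $i=j$ and $\beta_k\ge\alpha_k$ for all $k$. For $J\subseteq\{1,\dots,t\}$, $\mathbf X_J=\mathrm{lcm}\{\mathbf X_j:j\in J\}$, where the lcm of $x^\alpha\mathbf e_i$ and $x^\beta\mathbf e_j$ is $\mathbf 0$ if $i\neq j$, and $x^\gamma\mathbf e_i$ with $\gamma_k=\max(\alpha_k,\beta_k)$ if $i=j$. $J$ is saturated w.r.t. $\{\mathbf X_1,\dots,\mathbf X_t\}$ if for every $j\in\{1,\dots,t\}$, $\mathbf X_j\mid\mathbf X_J$ implies $j\in J$. A term of $A$ is $cx^\alpha$ with $c\in R$. A syzygy $\mathbf h=(h_1,\dots,h_t)^T\in\mathrm{Syz}(L)$ is homogeneous of degree $\mathbf X=X\mathbf e_i$ if each $h_j$ is a term and, for each $j$, either $h_j=0$ or $lm(lm(h_j)\mathbf X_j)=\mathbf X$. *)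

(* Defs.v *)
From HB Require Import structures.
From mathcomp Require Import all_boot all_order all_algebra.
Set Implicit Arguments. Unset Strict Implicit. Unset Printing Implicit Defensive.
Import GRing.Theory.
Local Open Scope ring_scope.

Definition exps (n : nat) := {ffun 'I_n -> nat}.
Definition expadd n (a b : exps n) : exps n := [ffun k => (a k + b k)%N].
Definition expmax n (a b : exps n) : exps n := [ffun k => maxn (a k) (b k)].
Definition expsub n (a b : exps n) : exps n := [ffun k => (a k - b k)%N].

Definition mon (A : nzRingType) n (x : 'I_n -> A) (a : exps n) : A :=
  \prod_(i < n) x i ^+ a i.

Definition sigma_pow (R : Type) n (sigma : 'I_n -> R -> R) (a : exps n) (r : R) : R :=
  foldr (fun i s => iter (a i) (sigma i) s) r (enum 'I_n).

Definition left_ideal (R : nzRingType) (I : R -> Prop) : Prop :=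
  I 0 /\ (forall a b, I a -> I b -> I (a + b)) /\ (forall r a, I a -> I (r * a)).
Definition left_noetherian (R : nzRingType) : Prop :=
  forall I : R -> Prop, left_ideal I ->
    exists s : seq R, (forall a, a \in s -> I a) /\
      (forall a, I a -> exists coef : 'I_(size s) -> R,
          a = \sum_(v < size s) coef v * nth 0 s v).

Definition invertible (R : nzRingType) (u : R) : Prop :=
  exists w, w * u = 1 /\ u * w = 1.

(* A (with R embedded by the injective ring morphism iota) is a quasi-commutative
   bijective sigma-PBW extension sigma(R)<x_1,...,x_n>, where
   sigma i r = c_{i,r}  (x_i r = c_{i,r} x_i),
   cij i j   = c_{i,j}  (x_j x_i = c_{i,j} x_i x_j),
   cab a b   = c_{alpha,beta} (x^alpha x^beta = c_{alpha,beta} x^{alpha+beta}). *)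
Definition qc_bij_sigma_PBW (R A : nzRingType) (iota : {rmorphism R -> A}) (n : nat)
  (x : 'I_n -> A) (sigma : 'I_n -> R -> R) (cij : 'I_n -> 'I_n -> R)
  (cab : exps n -> exps n -> R) : Prop :=
  injective iota /\
      (forall i, forall r, x i <> iota r) /\
      (forall a : A, exists s : seq (R * exps n),
          a = \sum_(p <- s) iota p.1 * mon x p.2) /\
      (forall (s : seq (exps n)) (f : exps n -> R), uniq s ->
          \sum_(al <- s) iota (f al) * mon x al = 0 ->
          forall al, al \in s -> f al = 0) /\
      (forall i r, x i * iota r = iota (sigma i r) * x i) /\
      (forall i r, r != 0 -> sigma i r != 0) /\
      (forall i j, x j * x i = iota (cij i j) * x i * x j) /\
      (forall i j, cij i j != 0) /\
      (forall i, bijective (sigma i)) /\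
      (forall i j : 'I_n, (i < j)%N -> invertible (cij i j)) /\
      (* the constants c_{alpha,beta} (here p_{alpha,beta} = 0) *)
      (forall a b, mon x a * mon x b = iota (cab a b) * mon x (expadd a b)).

(* Monomials of A^m: x^alpha e_i is encoded as the pair (alpha, i).
   The zero vector (lcm of monomials with different components) is None. *)
Definition mlcm n m (X Y : option (exps n * 'I_m)) : option (exps n * 'I_m) :=
  match X, Y with
  | Some (a, i), Some (b, j) => if i == j then Some (expmax a b, i) else None
  | _, _ => None
  end.

Definition mdivides n m (X Y : exps n * 'I_m) : bool :=
  (X.2 == Y.2) && [forall k, (X.1 k <= Y.1 k)%N].

Section Monomials.
Variables (n m t : nat) (beta : 'I_t -> exps n) (idx : 'I_t -> 'I_m).

Definition XJ (J : {set 'I_t}) : option (exps n * 'I_m) :=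
  match enum J with
  | [::] => None
  | j :: js => foldl (fun acc k => mlcm acc (Some (beta k, idx k))) (Some (beta j, idx j)) js
  end.

(* J saturated: X_j | X_J implies j in J  (only used when X_J <> 0) *)
Definition saturated (J : {set 'I_t}) : bool :=
  match XJ J with
  | Some Y => [forall j, mdivides (beta j, idx j) Y ==> (j \in J)]
  | None => true
  end.

Definition eligible (J : {set 'I_t}) : bool :=
  [&& J != set0, saturated J & XJ J != None].

Definition expXJ (J : {set 'I_t}) : exps n :=
  match XJ J with Some Y => Y.1 | None => [ffun => 0%N] end.

Definition gam (J : {set 'I_t}) (j : 'I_t) : exps n := expsub (expXJ J) (beta j).
End Monomials.

Section Syz.
Variables (R A : nzRingType) (iota : {rmorphism R -> A}) (n m t : nat)
  (x : 'I_n -> A) (c : 'I_t -> R) (beta : 'I_t -> exps n) (idx : 'I_t -> 'I_m).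

Definition inSyz (h : 'I_t -> A) : Prop :=
  forall k : 'I_m,
    \sum_(j < t) h j * (if idx j == k then iota (c j) * mon x (beta j) else 0) = 0.

Definition homogeneous (h : 'I_t -> A) (X : exps n * 'I_m) : Prop :=
  forall j, exists (r : R) (al : exps n), h j = iota r * mon x al /\
    (h j = 0 \/ (expadd al (beta j) = X.1 /\ idx j = X.2)).
End Syz.

(* Main.v *)
Require Import Defs.
From HB Require Import structures.
From mathcomp Require Import all_boot all_order all_algebra.
From mathcomp Require Import zify.
Set Implicit Arguments. Unset Strict Implicit. Unset Printing Implicit Defensive.
Import GRing.Theory.
Local Open Scope ring_scope.

Lemma index_enum_ord n : index_enum 'I_n = enum 'I_n.
Proof. by rewrite enumT /index_enum unlock. Qed.

Lemma inv_mul (R : nzRingType) (u v : R) : invertible u -> invertible v -> invertible (u * v).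
Proof.
move=> [u' [h1 h2]] [v' [h3 h4]]; exists (v' * u'); split.
  by rewrite mulrA -(mulrA v') h1 mulr1 h3.
by rewrite mulrA -(mulrA u) h4 mulr1 h2.
Qed.

Lemma inv1 (R : nzRingType) : invertible (1 : R).
Proof. by exists 1; rewrite mulr1. Qed.


Definition lee n (a b : exps n) : bool := [forall l, (a l <= b l)%N].

Section XJs.
Variables (n m t : nat) (beta : 'I_t -> exps n) (idx : 'I_t -> 'I_m).
Let f := (fun acc k => mlcm acc (Some (beta k, idx k))).

Lemma fold_none l : foldl f None l = None.
Proof. by elim: l. Qed.

Lemma fold_some l b0 i0 Y i : foldl f (Some (b0, i0)) l = Some (Y, i) ->
  i = i0 /\ lee b0 Y /\ forall k, k \in l -> idx k = i0 /\ lee (beta k) Y.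
Proof.
elim: l b0 => [|k l IH] b0 /=; first by case=> -> ->; split=> //; split => //; apply/forallP.
rewrite /f /=; case: eqP => [ei|_]; last by rewrite fold_none.
move/IH => [-> [/forallP h1 h2]]; split => //; split.
  by apply/forallP => q; apply: leq_trans (h1 q); rewrite ffunE leq_maxl.
move=> k'; rewrite inE => /orP [/eqP ->|/h2 //]; split => //.
by apply/forallP => q; apply: leq_trans (h1 q); rewrite ffunE leq_maxr.
Qed.

Lemma fold_le l b0 i0 X : lee b0 X -> (forall k, k \in l -> idx k = i0 /\ lee (beta k) X) ->
  exists Y, foldl f (Some (b0, i0)) l = Some (Y, i0) /\ lee Y X.
Proof.
elim: l b0 => [|k l IH] b0 hb hl /=; first by exists b0.
have [ek hk] := hl k (mem_head _ _).
rewrite /f /= ek eqxx; apply: IH => [|k' hk']; last by apply: hl; rewrite inE hk' orbT.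
apply/forallP => q; rewrite ffunE geq_max; move/forallP: hb => ->; by move/forallP: hk => ->.
Qed.

Lemma XJ_some J Y : XJ beta idx J = Some Y -> forall j, j \in J -> idx j = Y.2 /\ lee (beta j) Y.1.
Proof.
rewrite /XJ; case E: (enum J) => [|j0 js] // h j; rewrite -mem_enum E inE.
case: Y h => Y i h /=; have [-> [h1 h2]] := fold_some h.
by case/orP => [/eqP ->|/h2].
Qed.

Lemma XJ_le J k X : J != set0 -> (forall j, j \in J -> idx j = k /\ lee (beta j) X) ->
  exists Y, XJ beta idx J = Some (Y, k) /\ lee Y X.
Proof.
move=> hJ hl; rewrite /XJ; case E: (enum J) => [|j0 js].
  by case/set0Pn: hJ => j; rewrite -mem_enum E.
have hj0 : j0 \in J by rewrite -mem_enum E mem_head.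
have [ej hj] := hl j0 hj0.
rewrite ej; apply: fold_le => // q hq; apply: hl; by rewrite -mem_enum E inE hq orbT.
Qed.
End XJs.


Section Main.
Variables (R A : nzRingType) (iota : {rmorphism R -> A}) (n : nat)
  (x : 'I_n -> A) (sigma : 'I_n -> R -> R) (cij : 'I_n -> 'I_n -> R)
  (cab : exps n -> exps n -> R).
Hypothesis HA : qc_bij_sigma_PBW iota x sigma cij cab.

Local Notation mon := (mon x).
Local Notation sp := (sigma_pow sigma).

Lemma indep (s : seq (exps n)) (f : exps n -> R) : uniq s ->
  \sum_(al <- s) iota (f al) * mon al = 0 -> forall al, al \in s -> f al = 0.
Proof. by case: HA => [_ [_ [_ [H _]]]]; apply: H. Qed.

Lemma xcomm (i : 'I_n) r : x i * iota r = iota (sigma i r) * x i.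
Proof. by case: HA => [_ [_ [_ [_ [H _]]]]]. Qed.

Lemma xx (i j : 'I_n) : x j * x i = iota (cij i j) * x i * x j.
Proof. by case: HA => [_ [_ [_ [_ [_ [_ [H _]]]]]]]. Qed.

Lemma sig_bij (i : 'I_n) : bijective (sigma i).
Proof. by case: HA => [_ [_ [_ [_ [_ [_ [_ [_ [H _]]]]]]]]]. Qed.

Lemma cij_inv (i j : 'I_n) : (i < j)%N -> invertible (cij i j).
Proof. by case: HA => [_ [_ [_ [_ [_ [_ [_ [_ [_ [H _]]]]]]]]]]; apply: H. Qed.

Lemma cabP a b : mon a * mon b = iota (cab a b) * mon (expadd a b).
Proof. by case: HA => [_ [_ [_ [_ [_ [_ [_ [_ [_ [_ H]]]]]]]]]]. Qed.

Lemma single r a : iota r * mon a = 0 -> r = 0.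
Proof.
move=> h; apply: (@indep [:: a] (fun _ => r)) => //; last by rewrite inE.
by rewrite big_seq1.
Qed.

Lemma eq_coef r r' a : iota r * mon a = iota r' * mon a -> r = r'.
Proof.
move=> h; apply/eqP; rewrite -subr_eq0; apply/eqP/(single (a:=a)).
by rewrite rmorphB mulrBl h subrr.
Qed.

Lemma xpow_iota (i : 'I_n) p r : x i ^+ p * iota r = iota (iter p (sigma i) r) * x i ^+ p.
Proof.
elim: p r => [|p IH] r; first by rewrite !expr0 mul1r mulr1.
by rewrite exprS -mulrA IH mulrA xcomm -mulrA -exprS.
Qed.

Lemma mon_iota a r : mon a * iota r = iota (sp a r) * mon a.
Proof.
rewrite /Defs.mon /sigma_pow index_enum_ord.
elim: (enum 'I_n) r => [|i l IH] r /=; first by rewrite !big_nil mul1r mulr1.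
by rewrite !big_cons -mulrA IH mulrA xpow_iota mulrA.
Qed.

Lemma spD a r s : sp a (r + s) = sp a r + sp a s.
Proof.
apply: (@eq_coef _ _ a); rewrite -mon_iota rmorphD mulrDr !mon_iota.
by rewrite -mulrDl rmorphD.
Qed.

Lemma spM a r s : sp a (r * s) = sp a r * sp a s.
Proof.
apply: (@eq_coef _ _ a); rewrite -mon_iota rmorphM mulrA mon_iota -mulrA mon_iota.
by rewrite mulrA rmorphM.
Qed.

Lemma sp1 a : sp a 1 = 1.
Proof. by apply: (@eq_coef _ _ a); rewrite -mon_iota !rmorph1 mulr1 mul1r. Qed.

Lemma sp0 a : sp a 0 = 0.
Proof. by apply: (@eq_coef _ _ a); rewrite -mon_iota !rmorph0 mulr0 mul0r. Qed.

Lemma sp_inv a u : invertible u -> invertible (sp a u).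
Proof.
move=> [u' [h1 h2]]; exists (sp a u'); by rewrite -!spM h1 h2 sp1.
Qed.

Lemma sp_bij a : bijective (sp a).
Proof.
rewrite /sigma_pow; elim: (enum 'I_n) => [|i l IH] /=; first by exists id.
have hi : bijective (iter (a i) (sigma i)).
  elim: (a i) => [|p IHp] /=; first by exists id.
  apply: (@eq_bij _ _ (sigma i \o iter p (sigma i))) => // .
  by apply: bij_comp => //; apply: sig_bij.
by apply: (@eq_bij _ _ (iter (a i) (sigma i) \o (fun r => foldr (fun i0 s => iter (a i0) (sigma i0) s) r l))) => //; apply: bij_comp.
Qed.

Lemma sp_sum a (I : Type) (r : seq I) (F : I -> R) : sp a (\sum_(i <- r) F i) = \sum_(i <- r) sp a (F i).
Proof.
elim: r => [|y r IH]; first by rewrite !big_nil sp0.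
by rewrite !big_cons spD IH.
Qed.

Definition ee (i : 'I_n) : exps n := [ffun k => nat_of_bool (k == i)].

Definition Fp (i : 'I_n) (a : exps n) (k : nat) : A := x (insubd i k) ^+ a (insubd i k).

Lemma insubd_ord (i k : 'I_n) : insubd i (val k) = k.
Proof. by apply: val_inj; rewrite val_insubd ltn_ord. Qed.

Lemma mon_split (i : 'I_n) a : mon a =
  (\prod_(0 <= k < i) Fp i a k) * x i ^+ a i * \prod_(i.+1 <= k < n) Fp i a k.
Proof.
rewrite /Defs.mon (eq_bigr (fun k : 'I_n => Fp i a k)); last first.
  by move=> k _; rewrite /Fp insubd_ord.
rewrite -(big_mkord xpredT (Fp i a)) (@big_cat_nat _ _ _ i) //=; last exact: ltnW.
rewrite (@big_ltn _ _ _ i) // mulrA; congr (_ * _ * _).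
by rewrite /Fp insubd_ord.
Qed.

Lemma mon_ee (i : 'I_n) : mon (ee i) = x i.
Proof.
rewrite (mon_split i) !ffunE eqxx expr1.
rewrite (@eq_big_nat _ _ _ 0 i _ (fun _ => 1)); last first.
  move=> k /andP [_ hk]; rewrite /Fp ffunE.
  have -> : (insubd i k == i) = false.
    apply/negbTE; apply/eqP => e; move: (f_equal val e); rewrite val_insubd.
    rewrite (ltn_trans hk (ltn_ord i)) => e'; by rewrite e' ltnn in hk.
  by rewrite expr0.
rewrite (@eq_big_nat _ _ _ i.+1 n _ (fun _ => 1)); last first.
  move=> k /andP [hk hk2]; rewrite /Fp ffunE.
  have -> : (insubd i k == i) = false.
    apply/negbTE; apply/eqP => e; move: (f_equal val e); rewrite val_insubd hk2 => e'.
    by rewrite e' ltnn in hk.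
  by rewrite expr0.
by rewrite !big1_eq mul1r mulr1.
Qed.

Lemma sigma_sp (i : 'I_n) r : sigma i r = sp (ee i) r.
Proof.
apply: (@eq_coef _ _ (ee i)); by rewrite -mon_iota mon_ee xcomm.
Qed.

Lemma sig_inv (i : 'I_n) p u : invertible u -> invertible (iter p (sigma i) u).
Proof.
elim: p => [|p IH] //= hu; rewrite sigma_sp; apply: sp_inv; exact: IH.
Qed.

Lemma prod_iota (l : seq nat) (G : nat -> 'I_n) (pw : nat -> nat) (r : R) : invertible r ->
  exists r' : R, invertible r' /\
   (\prod_(k <- l) x (G k) ^+ pw k) * iota r = iota r' * \prod_(k <- l) x (G k) ^+ pw k.
Proof.
elim: l r => [|k l IH] r hr; first by exists r; rewrite !big_nil mul1r mulr1.
have [r1 [h1 e1]] := IH r hr.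
exists (iter (pw k) (sigma (G k)) r1); split; first exact: sig_inv.
by rewrite !big_cons -mulrA e1 mulrA xpow_iota -mulrA.
Qed.

Lemma xpow_x (k i : 'I_n) p : (i < k)%N ->
  exists u : R, invertible u /\ x k ^+ p * x i = iota u * x i * x k ^+ p.
Proof.
move=> ik; elim: p => [|p [u [hu e]]].
  by exists 1; split; [exact: inv1 | rewrite expr0 mul1r mulr1 rmorph1 mul1r].
exists (sigma k u * cij i k); split.
  by apply: inv_mul; [rewrite sigma_sp; apply: sp_inv | apply: cij_inv].
rewrite exprS -mulrA e !mulrA xcomm -(mulrA _ (x k)) xx rmorphM !mulrA.
by rewrite -!mulrA -exprS.
Qed.

Lemma prod_x (l : seq nat) (G : nat -> 'I_n) (pw : nat -> nat) (i : 'I_n) :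
  (forall k, k \in l -> (i < G k)%N) ->
  exists u : R, invertible u /\
   (\prod_(k <- l) x (G k) ^+ pw k) * x i = iota u * x i * \prod_(k <- l) x (G k) ^+ pw k.
Proof.
elim: l => [|k l IH] hl; first by exists 1; split; [exact: inv1|rewrite !big_nil rmorph1 !mul1r mulr1].
have [u1 [h1 e1]] := IH (fun k' hk' => hl k' (@mem_behead _ (k :: l) _ hk')).
have [u2 [h2 e2]] := xpow_x (pw k) (hl k (mem_head _ _)).
exists (iter (pw k) (sigma (G k)) u1 * u2); split; first by apply: inv_mul => //; apply: sig_inv.
rewrite !big_cons -mulrA e1 !mulrA xpow_iota -(mulrA _ (x (G k) ^+ pw k)) e2.
by rewrite rmorphM !mulrA.
Qed.

Lemma step a (i : 'I_n) : exists u : R, invertible u /\ mon a * x i = iota u * mon (expadd a (ee i)).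
Proof.
set a' := expadd a (ee i).
have hl : forall k, k \in index_iota i.+1 n -> (i < insubd i k)%N.
  by move=> k; rewrite mem_index_iota => /andP [h1 h2]; rewrite val_insubd h2.
have [u1 [h1 e1]] := @prod_x (index_iota i.+1 n) (insubd i) (fun k => a (insubd i k)) i hl.
have [u2 [h2 e2]] := @prod_iota (index_iota 0 i) (insubd i) (fun k => a (insubd i k)) (iter (a i) (sigma i) u1) (sig_inv _ _ h1).
exists u2; split => //.
rewrite (mon_split i a) (mon_split i a') -!mulrA.
rewrite /Fp in e1 e2 *; rewrite e1 !mulrA -(mulrA _ (x i ^+ a i)) xpow_iota !mulrA e2.
have ha : a' i = (a i).+1 by rewrite /a' /expadd !ffunE eqxx addn1.
rewrite ha exprSr !mulrA.
rewrite (@eq_big_nat _ _ _ 0 i (fun k => x (insubd i k) ^+ a' (insubd i k)) (fun k => x (insubd i k) ^+ a (insubd i k))); last first.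
  move=> k /andP [_ hk]; rewrite /a' /expadd ffunE ffunE.
  have -> : (insubd i k == i) = false.
    apply/negbTE; apply/eqP => e; move: (f_equal val e); rewrite val_insubd.
    rewrite (ltn_trans hk (ltn_ord i)) => e'; by rewrite e' ltnn in hk.
  by rewrite addn0.
rewrite (@eq_big_nat _ _ _ i.+1 n (fun k => x (insubd i k) ^+ a' (insubd i k)) (fun k => x (insubd i k) ^+ a (insubd i k))) //.
move=> k /andP [hk hk2]; rewrite /a' /expadd ffunE ffunE.
have -> : (insubd i k == i) = false.
  apply/negbTE; apply/eqP => e; move: (f_equal val e); rewrite val_insubd hk2 => e'.
  by rewrite e' ltnn in hk.
by rewrite addn0.
Qed.

Lemma mon0 : mon [ffun => 0%N] = 1.
Proof. by rewrite /Defs.mon big1 // => k _; rewrite ffunE expr0. Qed.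

Lemma expaddA (a b c : exps n) : expadd (expadd a b) c = expadd a (expadd b c).
Proof. by apply/ffunP => k; rewrite !ffunE addnA. Qed.

Lemma cab_inv a b : invertible (cab a b).
Proof.
have Z : forall b : exps n, ~~ [exists k, b k != 0%N] -> invertible (cab a b).
  move=> {}b; rewrite negb_exists => /forallP h.
  have b0 : b = [ffun => 0%N] by apply/ffunP => k; rewrite ffunE; apply/eqP; move: (h k); rewrite negbK.
  have e : expadd a b = a by apply/ffunP => k; rewrite b0 !ffunE addn0.
  have : iota (cab a b) * mon a = iota 1 * mon a by rewrite -{2}e -cabP b0 mon0 rmorph1 mulr1 mul1r.
  by move/eq_coef => ->; exact: inv1.
suff H : forall N (b : exps n), (\sum_(k < n) b k <= N)%N -> invertible (cab a b) by exact: (H _ b (leqnn _)).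
elim => [|N IH] {}b hb; case: (boolP [exists k, b k != 0%N]) => [/existsP [k hk]|/Z//].
  have : (b k <= \sum_(l < n) b l)%N by rewrite (bigD1 k) //= leq_addr.
  by move: hb hk; rewrite leqn0 => /eqP -> ; rewrite leqn0 => /negbTE ->.
set b' := expsub b (ee k).
have eb : expadd b' (ee k) = b.
  apply/ffunP => l; rewrite !ffunE; case: (l =P k) => [->|_] /=; last by rewrite !subn0 addn0.
  by rewrite subnK // lt0n.
have hb' : (\sum_(l < n) b' l <= N)%N.
  have : (\sum_(l < n) b l = \sum_(l < n) b' l + 1)%N.
    rewrite -{1}eb; under eq_bigr do rewrite ffunE; rewrite big_split /=; congr (_ + _)%N.
    rewrite (bigD1 k) //= ffunE eqxx big1 // => l hl; by rewrite ffunE (negbTE hl).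
  move=> e; move: hb; rewrite e addn1 ltnS; done.
have [u [hu eu]] := step b' k.
case: hu => [u' [hu1 hu2]].
have Hu := IH b' hb'.
have [u2 [h2 e2]] := step (expadd a b') k.
have emb : mon b = iota u' * mon b' * x k by rewrite -mulrA eu mulrA -rmorphM hu1 rmorph1 mul1r eb.
have : iota (cab a b) * mon (expadd a b) = iota (sp a u' * cab a b' * u2) * mon (expadd a b).
  rewrite -cabP emb !mulrA mon_iota -(mulrA _ (mon a)) cabP !mulrA -(mulrA _ (mon _)) e2.
  by rewrite !rmorphM !mulrA expaddA eb.
move/eq_coef => ->; apply: inv_mul; last by [].
apply: inv_mul => //; apply: sp_inv; by exists u.
Qed.

Lemma I1 d g c : cab d g * sp (expadd d g) c = sp d (sp g c) * cab d g.
Proof.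
apply: (@eq_coef _ _ (expadd d g)).
rewrite rmorphM -mulrA -mon_iota mulrA -cabP -mulrA mon_iota (mulrA (mon d)) mon_iota.
by rewrite -mulrA cabP !rmorphM mulrA.
Qed.

Lemma I2 d g b : cab d g * cab (expadd d g) b = sp d (cab g b) * cab d (expadd g b).
Proof.
apply: (@eq_coef _ _ (expadd (expadd d g) b)).
rewrite rmorphM -mulrA -cabP mulrA -cabP -mulrA cabP mulrA mon_iota -mulrA cabP.
by rewrite mulrA -rmorphM expaddA.
Qed.

Lemma term_mul (b c : R) g be :
  iota b * mon g * (iota c * mon be) = iota (b * (sp g c * cab g be)) * mon (expadd g be).
Proof.
by rewrite -mulrA (mulrA (mon g)) mon_iota -mulrA cabP !rmorphM !mulrA.
Qed.


Lemma part1 m t (c : 'I_t -> R) (beta : 'I_t -> exps n) (idx : 'I_t -> 'I_m) J Y (b : 'I_t -> R) :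
  XJ beta idx J = Some Y ->
  \sum_(j in J) b j * (sp (gam beta idx J j) (c j) * cab (gam beta idx J j) (beta j)) = 0 ->
  inSyz iota x c beta idx (fun j => if j \in J then iota (b j) * mon (gam beta idx J j) else 0) /\
  homogeneous iota x beta idx (fun j => if j \in J then iota (b j) * mon (gam beta idx J j) else 0) Y.
Proof.
move=> hY hs; have hJ := XJ_some hY.
have hg : forall j, j \in J -> expadd (gam beta idx J j) (beta j) = Y.1.
  move=> j /hJ [_ /forallP hl]; apply/ffunP => q; rewrite /gam /expXJ hY !ffunE subnK //.
split.
  move=> k.
  have ht : forall j, (if j \in J then iota (b j) * mon (gam beta idx J j) else 0) *
      (if idx j == k then iota (c j) * mon (beta j) else 0) =
      if (Y.2 == k) && (j \in J) then
        iota (b j * (sp (gam beta idx J j) (c j) * cab (gam beta idx J j) (beta j))) * mon Y.1 else 0.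
    move=> j; case: (boolP (j \in J)) => hj; last by rewrite andbF mul0r.
    have [ei _] := hJ j hj; rewrite ei andbT; case: ifP => _; last by rewrite mulr0.
    by rewrite term_mul hg.
  rewrite (eq_bigr _ (fun j _ => ht j)) -big_mkcond /=.
  case hk: (Y.2 == k) => /=; last by rewrite big_pred0.
  by rewrite -mulr_suml -rmorph_sum hs rmorph0 mul0r.
move=> j /=; case: ifP => hj.
  exists (b j), (gam beta idx J j); split => //; right; split; [exact: hg | by case: (hJ j hj)].
by exists 0, Y.1; split; [rewrite rmorph0 mul0r | left].
Qed.

Lemma sp_sumP a (I : Type) (r : seq I) (P : pred I) (F : I -> R) :
  sp a (\sum_(i <- r | P i) F i) = \sum_(i <- r | P i) sp a (F i).
Proof.
elim: r => [|y r IH]; first by rewrite !big_nil sp0.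
by rewrite !big_cons; case: ifP => // _; rewrite spD IH.
Qed.

Lemma core m t (c : 'I_t -> R) (beta : 'I_t -> exps n) (idx : 'I_t -> 'I_m)
  (B : {set 'I_t} -> seq {ffun 'I_t -> R})
  (HB : forall J, eligible beta idx J ->
     forall f : 'I_t -> R, \sum_(j in J) f j * (sp (gam beta idx J j) (c j) * cab (gam beta idx J j) (beta j)) = 0 ->
        exists a : 'I_(size (B J)) -> R, forall j, j \in J ->
          f j = \sum_(v < size (B J)) a v * nth [ffun => 0] (B J) v j)
  (X : exps n) (k : 'I_m) (r : 'I_t -> R) :
  \sum_(j | (idx j == k) && lee (beta j) X) r j * (sp (expsub X (beta j)) (c j) * cab (expsub X (beta j)) (beta j)) = 0 ->
  exists coef : {set 'I_t} -> nat -> A, forall j,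
   (if (idx j == k) && lee (beta j) X then iota (r j) * mon (expsub X (beta j)) else 0) =
   \sum_(J : {set 'I_t} | eligible beta idx J) \sum_(v < size (B J)) coef J v *
      (if j \in J then iota (nth [ffun => 0] (B J) v j) * mon (gam beta idx J j) else 0).
Proof.
move=> hsum.
set P := fun j => (idx j == k) && lee (beta j) X.
set J := [set j | P j].
have inJ : forall j, (j \in J) = P j by move=> j; rewrite inE.
case: (boolP (J == set0)) => hJ0.
  exists (fun _ _ => 0) => j.
  rewrite -/(P j); have -> : P j = false by rewrite -inJ (eqP hJ0) inE.
  by rewrite big1 // => J' _; rewrite big1 // => v _; rewrite mul0r.
have [Y [hY hYX]] : exists Y, XJ beta idx J = Some (Y, k) /\ lee Y X.
  apply: XJ_le hJ0 _ => j; rewrite inJ => /andP [/eqP -> h]; by split.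
have hJ := XJ_some hY.
have el : eligible beta idx J.
  apply/and3P; split => //; last by rewrite hY.
  rewrite /saturated hY; apply/forallP => j; apply/implyP.
  move=> /andP [/= /eqP hi /forallP hb]; rewrite inJ /P hi eqxx /=; apply/forallP => q.
  by apply: leq_trans (hb q) _; move/forallP: hYX => ->.
set d := expsub X Y.
have hgam : forall j, gam beta idx J j = expsub Y (beta j) by move=> j; rewrite /gam /expXJ hY.
have hle : forall j, j \in J -> forall q, (beta j q <= Y q)%N /\ (Y q <= X q)%N.
  move=> j /hJ [_ /forallP h] q; split => //; by move/forallP: hYX.
have ha : forall j, j \in J -> expsub X (beta j) = expadd d (gam beta idx J j).
  move=> j hj; apply/ffunP => q; rewrite hgam !ffunE; have [h1 h2] := hle j hj q.
  by rewrite addnBA // subnK.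
have hgb : forall j, j \in J -> expadd (gam beta idx J j) (beta j) = Y.
  move=> j hj; apply/ffunP => q; rewrite hgam !ffunE; have [h1 h2] := hle j hj q; by rewrite subnK.
have hex : forall j : 'I_t, exists w : R, w * cab d (gam beta idx J j) = 1.
  by move=> j; have [w [h1 h2]] := cab_inv d (gam beta idx J j); exists w.
have [uinv huinv] := @fin_all_exists 'I_t (fun _ => R) (fun j w => w * cab d (gam beta idx J j) = 1) hex.
have [Ui [_ hUi]] := cab_inv d Y.
have [spi h1 h2] := sp_bij d.
pose f j := r j * uinv j.
pose f' j := spi (f j).
have hz : \sum_(j in J) f' j * (sp (gam beta idx J j) (c j) * cab (gam beta idx J j) (beta j)) = 0.
  apply: (can_inj h1); rewrite sp0 sp_sumP.
  have -> : \sum_(j in J) sp d (f' j * (sp (gam beta idx J j) (c j) * cab (gam beta idx J j) (beta j)))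
     = ((\sum_(j in J) sp d (f' j * (sp (gam beta idx J j) (c j) * cab (gam beta idx J j) (beta j)))) * cab d Y) * Ui.
    by rewrite -mulrA hUi mulr1.
  rewrite mulr_suml.
  rewrite (eq_bigr (fun j => r j * (sp (expsub X (beta j)) (c j) * cab (expsub X (beta j)) (beta j)))).
    by rewrite (eq_bigl P) ?hsum ?mul0r // => j; rewrite inJ.
  move=> j hj; rewrite (ha j hj) !spM /f' h2 /f.
  rewrite -{2}(mulr1 (r j)) -(huinv j) -!mulrA; congr (_ * (_ * _)).
  by rewrite [RHS]mulrA I1 -mulrA I2 hgb.
have [a ha'] := HB J el f' hz.
pose a' (v : nat) := if insub v is Some o then a o else 0.
exists (fun J' v => if J' == J then iota (sp d (a' v)) * mon d else 0) => j.
rewrite (bigD1 J el) /= eqxx [X in _ + X]big1 ?addr0; last first.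
  by move=> J' /andP [_ /negbTE ->]; rewrite big1 // => v _; rewrite mul0r.
case: (boolP (j \in J)) => hj; last first.
  rewrite -/(P j) -inJ (negbTE hj) big1 // => v _; by rewrite mulr0.
rewrite -/(P j) -inJ hj (ha j hj).
under eq_bigr => v _ do rewrite term_mul.
rewrite -mulr_suml -rmorph_sum; congr (iota _ * _).
have -> : r j = f j * cab d (gam beta idx J j) by rewrite /f -mulrA huinv mulr1.
rewrite -[f j]h2 -/(f' j) (ha' j hj) sp_sum mulr_suml; apply: eq_bigr => v _.
by rewrite /a' valK spM !mulrA.
Qed.

Lemma sum_pred1 (T : eqType) (S : seq T) a (F : T -> A) : uniq S ->
  \sum_(y <- S | y == a) F y = if a \in S then F a else 0.
Proof.
move=> uS; case: ifP => ha.
  rewrite (big_rem a) //= eqxx big1_seq ?addr0 // => y /andP [/eqP -> ].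
  by rewrite mem_rem_uniq // inE eqxx.
by rewrite big1_seq // => y /andP [/eqP -> h]; rewrite h in ha.
Qed.

Lemma regroup (s : seq (R * exps n)) (S : seq (exps n)) (G : exps n -> A) : uniq S ->
  (forall p, p \in s -> p.2 \in S) ->
  \sum_(p <- s) iota p.1 * G p.2 = \sum_(al <- S) iota (\sum_(p <- s | p.2 == al) p.1) * G al.
Proof.
move=> uS hs.
have e1 : forall al, iota (\sum_(p <- s | p.2 == al) p.1) * G al =
    \sum_(p <- s) (if p.2 == al then iota p.1 * G p.2 else 0).
  move=> al; rewrite rmorph_sum mulr_suml big_mkcond /=; apply: eq_bigr => p _.
  by case: eqP => [->|_]; rewrite ?mul0r.
rewrite (eq_bigr _ (fun al _ => e1 al)) exchange_big /=.
rewrite big_seq_cond [RHS]big_seq_cond; apply: eq_bigr => p /andP [hp _].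
rewrite -big_mkcond /= (eq_bigl (fun al => al == p.2)) ?sum_pred1 ?hs //.
Qed.

Lemma reidx (be : exps n) (S T : seq (exps n)) (H : exps n -> A) : uniq S -> uniq T ->
  (forall al, al \in S -> expadd al be \in T) -> (forall al, al \notin S -> H al = 0) ->
  \sum_(al <- S) H al = \sum_(X <- T) (if lee be X then H (expsub X be) else 0).
Proof.
move=> uS uT hST hH.
have key : forall X, (if lee be X then H (expsub X be) else 0) =
    \sum_(al <- S) (if expadd al be == X then H al else 0).
  move=> X; rewrite -big_mkcond /=; case: ifP => hl.
    rewrite (eq_bigl (fun al => al == expsub X be)) ?sum_pred1 //.
      by case: ifP => // /negbT /hH ->.
    move=> al; apply/eqP/eqP => e.
      by apply/ffunP => q; rewrite -e !ffunE addnK.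
    apply/ffunP => q; rewrite e !ffunE subnK //; by move/forallP: hl.
  rewrite big1 // => al /eqP e; move: hl; rewrite -e.
  by have -> : lee be (expadd al be) by apply/forallP => q; rewrite ffunE leq_addl.
rewrite (eq_bigr _ (fun X _ => key X)) exchange_big /=.
rewrite big_seq [RHS]big_seq; apply: eq_bigr => al hal.
rewrite -big_mkcond /= (eq_bigl (fun X => X == expadd al be)) ?sum_pred1 ?hST //.
Qed.

Lemma basis (a : A) : exists s : seq (R * exps n), a = \sum_(p <- s) iota p.1 * mon p.2.
Proof. by case: HA => [_ [_ [H _]]]; apply: H. Qed.

Lemma part2 m t (c : 'I_t -> R) (beta : 'I_t -> exps n) (idx : 'I_t -> 'I_m)
  (B : {set 'I_t} -> seq {ffun 'I_t -> R})
  (HB : forall J, eligible beta idx J ->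
     forall f : 'I_t -> R, \sum_(j in J) f j * (sp (gam beta idx J j) (c j) * cab (gam beta idx J j) (beta j)) = 0 ->
        exists a : 'I_(size (B J)) -> R, forall j, j \in J ->
          f j = \sum_(v < size (B J)) a v * nth [ffun => 0] (B J) v j)
  (h : 'I_t -> A) : inSyz iota x c beta idx h ->
  exists coef : {set 'I_t} -> nat -> A, forall j,
   h j = \sum_(J : {set 'I_t} | eligible beta idx J) \sum_(v < size (B J)) coef J v *
      (if j \in J then iota (nth [ffun => 0] (B J) v j) * mon (gam beta idx J j) else 0).
Proof.
move=> hsyz.
have [ss hss] := @fin_all_exists 'I_t (fun _ => seq (R * exps n))
   (fun j sq => h j = \sum_(p <- sq) iota p.1 * mon p.2) (fun j => basis (h j)).
pose S := undup (flatten [seq [seq p.2 | p <- ss j] | j <- enum 'I_t]).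
have uS : uniq S := undup_uniq _.
have inS : forall j p, p \in ss j -> p.2 \in S.
  move=> j p hp; rewrite mem_undup; apply/flattenP; exists [seq p.2 | p <- ss j].
    by apply/mapP; exists j; rewrite ?mem_enum.
  exact: map_f.
pose f j al := \sum_(p <- ss j | p.2 == al) p.1.
have f0 : forall j al, al \notin S -> f j al = 0.
  move=> j al hal; apply: big1_seq => p /andP [/eqP hp hp']; move: (inS j p hp').
  by rewrite hp (negbTE hal).
have E1 : forall j, h j = \sum_(al <- S) iota (f j al) * mon al.
  by move=> j; rewrite hss; apply: regroup => // p; apply: inS.
pose T := undup [seq expadd al (beta j) | al <- S, j <- enum 'I_t].
have uT : uniq T := undup_uniq _.
have hST : forall j al, al \in S -> expadd al (beta j) \in T.
  move=> j al hal; rewrite mem_undup; apply/allpairsP; exists (al, j); split => //.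
  by rewrite mem_enum.
have E3 : forall j, h j = \sum_(X <- T) (if lee (beta j) X then
    iota (f j (expsub X (beta j))) * mon (expsub X (beta j)) else 0).
  move=> j; rewrite E1; apply: (@reidx (beta j) S T (fun al => iota (f j al) * mon al)) => //.
    by move=> al; apply: hST.
  by move=> al /f0 ->; rewrite rmorph0 mul0r.
pose g j X := f j (expsub X (beta j)) * (sp (expsub X (beta j)) (c j) * cab (expsub X (beta j)) (beta j)).
have E2 : forall j k, h j * (if idx j == k then iota (c j) * mon (beta j) else 0) =
   \sum_(X <- T) (if (idx j == k) && lee (beta j) X then iota (g j X) * mon X else 0).
  move=> j k; case: (idx j == k) => /=; last by rewrite mulr0 big1.
  rewrite E1 mulr_suml (eq_bigr (fun al => iota (f j al * (sp al (c j) * cab al (beta j))) * mon (expadd al (beta j)))); last first.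
    by move=> al _; rewrite term_mul.
  rewrite (@reidx (beta j) S T (fun al => iota (f j al * (sp al (c j) * cab al (beta j))) * mon (expadd al (beta j)))) //.
  - apply: eq_bigr => X _; case: ifP => // hl; congr (_ * mon _).
    by apply/ffunP => q; rewrite !ffunE subnK //; move/forallP: hl.
  - by move=> al; apply: hST.
  - by move=> al /f0 ->; rewrite !mul0r rmorph0 mul0r.
have hg : forall (k : 'I_m) X, X \in T -> \sum_(j | (idx j == k) && lee (beta j) X) g j X = 0.
  move=> k X hX; have := hsyz k; rewrite (eq_bigr _ (fun j _ => E2 j k)) exchange_big /= => e.
  apply: (@indep T (fun X => \sum_(j | (idx j == k) && lee (beta j) X) g j X) uT _ X hX).
  rewrite -[RHS]e; apply: eq_bigr => Y _; rewrite rmorph_sum mulr_suml big_mkcond /=.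
  by apply: eq_bigr => j _; case: ifP; rewrite ?mul0r.
pose s (J : {set 'I_t}) (v : nat) (j : 'I_t) := if j \in J then iota (nth [ffun => 0] (B J) v j) * mon (gam beta idx J j) else 0.
have comb : forall l, {subset l <= T} -> exists coef : {set 'I_t} -> nat -> A, forall j,
    \sum_(X <- l) (if lee (beta j) X then iota (f j (expsub X (beta j))) * mon (expsub X (beta j)) else 0)
    = \sum_(J : {set 'I_t} | eligible beta idx J) \sum_(v < size (B J)) coef J v * s J v j.
  elim => [|X l IH] hl.
    exists (fun _ _ => 0) => j; rewrite big_nil big1 // => J _; rewrite big1 // => v _.
    by rewrite mul0r.
  have hX : X \in T by apply: hl; rewrite mem_head.
  have [cl hcl] := IH (fun y hy => hl y (mem_behead (s := X :: l) hy)).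
  have hk : forall k : 'I_m, exists cf : {set 'I_t} -> nat -> A, forall j,
      (if (idx j == k) && lee (beta j) X then iota (f j (expsub X (beta j))) * mon (expsub X (beta j)) else 0)
      = \sum_(J : {set 'I_t} | eligible beta idx J) \sum_(v < size (B J)) cf J v * s J v j.
    move=> k; exact: (core HB (hg k X hX)).
  have [cf hcf] := @fin_all_exists 'I_m (fun _ => {set 'I_t} -> nat -> A) _ hk.
  exists (fun J v => \sum_(k < m) cf k J v + cl J v) => j.
  under [RHS]eq_bigr => J _ do under eq_bigr => v _ do rewrite mulrDl mulr_suml.
  under [RHS]eq_bigr => J _ do rewrite big_split /=.
  rewrite big_split /= big_cons -hcl; congr (_ + _).
  under [RHS]eq_bigr => J _ do rewrite exchange_big /=.
  rewrite exchange_big /=.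
  under [RHS]eq_bigr => k _ do rewrite -hcf.
  rewrite (bigD1 (idx j)) //= eqxx /= big1 ?addr0 // => k hk'.
  by rewrite eq_sym (negbTE hk').
have [coef hc] := comb T (fun y hy => hy).
by exists coef => j; rewrite E3 hc.
Qed.

End Main.

Theorem lemma38 (R A : nzRingType) (iota : {rmorphism R -> A}) (n : nat)
  (x : 'I_n -> A) (sigma : 'I_n -> R -> R) (cij : 'I_n -> 'I_n -> R)
  (cab : exps n -> exps n -> R)
  (HA : qc_bij_sigma_PBW iota x sigma cij cab)
  (HR : left_noetherian R)
  (m t : nat) (c : 'I_t -> R) (Hc : forall j, c j != 0)
  (beta : 'I_t -> exps n) (idx : 'I_t -> 'I_m)
  (B : {set 'I_t} -> seq {ffun 'I_t -> R})
  (HB : forall J, eligible beta idx J ->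
     let w := fun j => sigma_pow sigma (gam beta idx J j) (c j)
                        * cab (gam beta idx J j) (beta j) in
     (forall v : nat, (v < size (B J))%N ->
        \sum_(j in J) nth [ffun => 0] (B J) v j * w j = 0) /\
     (forall f : 'I_t -> R, \sum_(j in J) f j * w j = 0 ->
        exists a : 'I_(size (B J)) -> R, forall j, j \in J ->
          f j = \sum_(v < size (B J)) a v * nth [ffun => 0] (B J) v j)) :
  let s := fun (J : {set 'I_t}) (v : nat) (j : 'I_t) =>
     if j \in J then iota (nth [ffun => 0] (B J) v j) * mon x (gam beta idx J j) else 0 in
  (forall J Y, eligible beta idx J -> XJ beta idx J = Some Y ->
     forall v : nat, (v < size (B J))%N ->
       inSyz iota x c beta idx (s J v) /\ homogeneous iota x beta idx (s J v) Y) /\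
  (forall h : 'I_t -> A, inSyz iota x c beta idx h ->
     exists coef : {set 'I_t} -> nat -> A, forall j,
       h j = \sum_(J : {set 'I_t} | eligible beta idx J)
               \sum_(v < size (B J)) coef J v * s J v j).
Proof.
move=> s; split.
  move=> J Y el hY v hv; have [h1 _] := HB J el.
  exact: (part1 HA hY (h1 v hv)).
move=> h hh.
have HB' : forall J, eligible beta idx J ->
     forall f : 'I_t -> R, \sum_(j in J) f j * (sigma_pow sigma (gam beta idx J j) (c j) * cab (gam beta idx J j) (beta j)) = 0 ->
        exists a : 'I_(size (B J)) -> R, forall j, j \in J ->
          f j = \sum_(v < size (B J)) a v * nth [ffun => 0] (B J) v j.
  by move=> J el; have [_ h2] := HB J el.
exact: (part2 HA HB' hh).
Qed.
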